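(* (Subject reduction for LPCF.) If $\Gamma;\Delta\vdash e:\tau$ and $e\rightsquigarrow e'$, then $\Gamma;\Delta\vdash e':\tau$.
   Context: LPCF (linear PCF). Types: $\tau ::= \mathsf{Nat}\mid\mathsf{Bool}\mid \tau\,\&\,\tau' \mid \tau\otimes\tau' \mid \tau\multimap\tau' \mid \tau\to\tau'$. Terms: $e ::= x \mid \mathtt{0},\mathtt{1},\mathtt{2},\dots \mid \mathtt{succ}\mid\mathtt{pred}\mid\mathtt{iszero} \mid \lambda x.e \mid e\,e' \mid \mathtt{true}\mid\mathtt{false} \mid \mathtt{if}\ e_1\ \mathtt{then}\ e_2\ \mathtt{else}\ e_3 \mid \langle e_1,e_2\rangle \mid \mathtt{proj}_i(e)\ (i=1,2) \mid \mathtt{fix}_\tau \mid e_1\otimes e_2 \mid \mathtt{let}\ x\otimes y = e\ \mathtt{in}\ e'$. Terms are identified up to renaming of bound variables and $e[e'/x]$ is capture-avoiding substitution. Typing judgements $\Gamma;\Delta\vdash e:\tau$, with $\Gamma$ (non-linear) and $\Delta$ (linear) finite maps from variables to types with disjoint domains ($\Delta,\Delta'$ denotes a disjoint union). Rules: $\Gamma;\emptyset\vdash x:\tau$ if $x:\tau\in\Gamma$; $\Gamma;x:\tau\vdash x:\tau$ if $x\notin\Gamma$; $\Gamma;\emptyset\vdash\mathtt{fix}_\tau:(\tau\to\tau)\to\tau$; $\Gamma;\emptyset\vdash n:\mathsf{Nat}$ for numerals; $\Gamma;\emptyset\vdash\mathtt{succ},\mathtt{pred}:\mathsf{Nat}\multimap\mathsf{Nat}$;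 $\Gamma;\emptyset\vdash\mathtt{iszero}:\mathsf{Nat}\multimap\mathsf{Bool}$; $\Gamma;\emptyset\vdash\mathtt{true},\mathtt{false}:\mathsf{Bool}$; from $\Gamma;\Delta\vdash e_1:\mathsf{Bool}$, $\Gamma;\Delta'\vdash e_2:\tau$, $\Gamma;\Delta'\vdash e_3:\tau$ infer $\Gamma;\Delta,\Delta'\vdash \mathtt{if}\ e_1\ \mathtt{then}\ e_2\ \mathtt{else}\ e_3:\tau$; from $\Gamma;\Delta\vdash e_i:\tau_i$ ($i=1,2$) infer $\Gamma;\Delta\vdash\langle e_1,e_2\rangle:\tau_1\&\tau_2$; from $\Gamma;\Delta\vdash e:\tau_1\&\tau_2$ infer $\Gamma;\Delta\vdash\mathtt{proj}_i(e):\tau_i$; from $\Gamma;\Delta_i\vdash e_i:\tau_i$ infer $\Gamma;\Delta_1,\Delta_2\vdash e_1\otimes e_2:\tau_1\otimes\tau_2$; from $\Gamma;\Delta,x:\tau_1,y:\tau_2\vdash e:\tau$ and $\Gamma;\Delta'\vdash e':\tau_1\otimes\tau_2$ infer $\Gamma;\Delta,\Delta'\vdash\mathtt{let}\ x\otimes y=e'\ \mathtt{in}\ e:\tau$; from $\Gamma,x:\tau;\Delta\vdash e:\tau'$ infer $\Gamma;\Delta\vdash\lambda x.e:\tau\to\tau'$; from $\Gamma;\Delta\vdash e:\tau'\to\tau$ and $\Gamma;\emptyset\vdash e':\tau'$ infer $\Gamma;\Delta\vdash e\,e':\tau$; from $\Gamma;\Delta,x:\tau\vdash e:\tau'$ infer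 $\Gamma;\Delta\vdash\lambda x.e:\tau\multimap\tau'$; from $\Gamma;\Delta\vdash e:\tau'\multimap\tau$ and $\Gamma;\Delta'\vdash e':\tau'$ infer $\Gamma;\Delta,\Delta'\vdash e\,e':\tau$. One-step reduction $\rightsquigarrow$: the least relation containing $(\lambda x.e)e'\rightsquigarrow e[e'/x]$; $\mathtt{fix}_\tau\,e\rightsquigarrow e(\mathtt{fix}_\tau\,e)$; $\mathtt{succ}\,n\rightsquigarrow n+1$; $\mathtt{pred}\,0\rightsquigarrow 0$; $\mathtt{pred}\,n\rightsquigarrow n-1$ ($n\ge1$); $\mathtt{iszero}\,0\rightsquigarrow\mathtt{true}$; $\mathtt{iszero}\,n\rightsquigarrow\mathtt{false}$ ($n\ge1$); $\mathtt{if}\ \mathtt{true}\ \mathtt{then}\ e_1\ \mathtt{else}\ e_2\rightsquigarrow e_1$; $\mathtt{if}\ \mathtt{false}\ \mathtt{then}\ e_1\ \mathtt{else}\ e_2\rightsquigarrow e_2$; $\mathtt{proj}_i\langle e_1,e_2\rangle\rightsquigarrow e_i$; $\mathtt{let}\ x\otimes y=e_1\otimes e_2\ \mathtt{in}\ e\rightsquigarrow e[e_1/x,e_2/y]$; and closed under $\mathcal{E}[e_1]\rightsquigarrow\mathcal{E}[e_2]$ when $e_1\rightsquigarrow e_2$, for evaluation contexts $\mathcal{E}::=[\,]\mid\mathtt{succ}(\mathcal{E})\mid\mathtt{pred}(\mathcal{E})\mid\mathtt{iszero}(\mathcal{E})\mid\mathcal{E}\,e\mid\mathtt{if}\ \mathcal{E}\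 \mathtt{then}\ e_1\ \mathtt{else}\ e_2\mid\mathtt{proj}_i(\mathcal{E})\mid\mathtt{let}\ x\otimes y=\mathcal{E}\ \mathtt{in}\ e$. *)

(* Defs.v *)
(* Terms are represented with de Bruijn indices (terms up to alpha-renaming);
   a typing context is one list assigning to each variable index either
   nothing, a non-linear type (an entry of Gamma) or a linear type (an entry
   of Delta); so Gamma and Delta automatically have disjoint domains. *)
From Stdlib Require Import List Arith.
Import ListNotations.

Inductive ty : Type :=
| TNat : ty
| TBool : ty
| TWith : ty -> ty -> ty
| TTensor : ty -> ty -> ty
| TLolli : ty -> ty -> ty
| TArrow : ty -> ty -> ty.

Inductive tm : Type :=
| Var : nat -> tm
| Num : nat -> tm
| Succ : tm
| Pred : tm
| IsZero : tm
| Lam : tm -> tm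
| App : tm -> tm -> tm
| Tru : tm
| Fls : tm
| If : tm -> tm -> tm -> tm
| Pair : tm -> tm -> tm
| Proj1 : tm -> tm
| Proj2 : tm -> tm
| Fix : ty -> tm
| Tens : tm -> tm -> tm
| LetT : tm -> tm -> tm.         (* LetT e' e = let x (x) y = e' in e ;
                                    in e, y is index 0 and x is index 1 *)

Definition scons {A} (a : A) (f : nat -> A) : nat -> A :=
  fun n => match n with 0 => a | S n => f n end.

Definition up_ren (r : nat -> nat) : nat -> nat := scons 0 (fun n => S (r n)).

Fixpoint ren (r : nat -> nat) (e : tm) : tm :=
  match e with
  | Var n => Var (r n)
  | Num n => Num n
  | Succ => Succ | Pred => Pred | IsZero => IsZero
  | Lam b => Lam (ren (up_ren r) b)
  | App a b => App (ren r a) (ren r b)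
  | Tru => Tru | Fls => Fls
  | If a b c => If (ren r a) (ren r b) (ren r c)
  | Pair a b => Pair (ren r a) (ren r b)
  | Proj1 a => Proj1 (ren r a)
  | Proj2 a => Proj2 (ren r a)
  | Fix t => Fix t
  | Tens a b => Tens (ren r a) (ren r b)
  | LetT a b => LetT (ren r a) (ren (up_ren (up_ren r)) b)
  end.

Definition up_sub (s : nat -> tm) : nat -> tm :=
  scons (Var 0) (fun n => ren S (s n)).

Fixpoint subst (s : nat -> tm) (e : tm) : tm :=
  match e with
  | Var n => s n
  | Num n => Num n
  | Succ => Succ | Pred => Pred | IsZero => IsZero
  | Lam b => Lam (subst (up_sub s) b)
  | App a b => App (subst s a) (subst s b)
  | Tru => Tru | Fls => Fls
  | If a b c => If (subst s a) (subst s b) (subst s c)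
  | Pair a b => Pair (subst s a) (subst s b)
  | Proj1 a => Proj1 (subst s a)
  | Proj2 a => Proj2 (subst s a)
  | Fix t => Fix t
  | Tens a b => Tens (subst s a) (subst s b)
  | LetT a b => LetT (subst s a) (subst (up_sub (up_sub s)) b)
  end.

Definition subst1 (e' e : tm) : tm := subst (scons e' Var) e.
Definition subst2 (e1 e2 e : tm) : tm := subst (scons e2 (scons e1 Var)) e.

Inductive step : tm -> tm -> Prop :=
| st_beta : forall e e', step (App (Lam e) e') (subst1 e' e)
| st_fix : forall t e, step (App (Fix t) e) (App e (App (Fix t) e))
| st_succ : forall n, step (App Succ (Num n)) (Num (S n))
| st_pred0 : step (App Pred (Num 0)) (Num 0)
| st_predS : forall n, 1 <= n -> step (App Pred (Num n)) (Num (n - 1))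
| st_iszero0 : step (App IsZero (Num 0)) Tru
| st_iszeroS : forall n, 1 <= n -> step (App IsZero (Num n)) Fls
| st_iftrue : forall e1 e2, step (If Tru e1 e2) e1
| st_iffalse : forall e1 e2, step (If Fls e1 e2) e2
| st_proj1 : forall e1 e2, step (Proj1 (Pair e1 e2)) e1
| st_proj2 : forall e1 e2, step (Proj2 (Pair e1 e2)) e2
| st_let : forall e1 e2 e, step (LetT (Tens e1 e2) e) (subst2 e1 e2 e)
(* closure under evaluation contexts
   E ::= [] | succ(E) | pred(E) | iszero(E) | E e | if E then e1 else e2
       | proj_i(E) | let x (x) y = E in e *)
| st_ctx_succ : forall a b, step a b -> step (App Succ a) (App Succ b)
| st_ctx_pred : forall a b, step a b -> step (App Pred a) (App Pred b)
| st_ctx_iszero : forall a b, step a b -> step (App IsZero a) (App IsZero b)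
| st_ctx_app : forall a b e, step a b -> step (App a e) (App b e)
| st_ctx_if : forall a b e1 e2, step a b -> step (If a e1 e2) (If b e1 e2)
| st_ctx_proj1 : forall a b, step a b -> step (Proj1 a) (Proj1 b)
| st_ctx_proj2 : forall a b, step a b -> step (Proj2 a) (Proj2 b)
| st_ctx_let : forall a b e, step a b -> step (LetT a e) (LetT b e).

Inductive mode : Type := NonLin | Lin.

(* entry i: None = unbound; Some (NonLin, t) = i:t in Gamma;
   Some (Lin, t) = i:t in Delta *)
Definition ctx := list (option (mode * ty)).

Definition lookup (G : ctx) (i : nat) : option (mode * ty) := nth i G None.

Definition no_lin (G : ctx) : Prop :=
  forall i t, lookup G i <> Some (Lin, t).

Definition only_lin (G : ctx) (i : nat) : Prop :=
  forall j t, j <> i -> lookup G j <> Some (Lin, t).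

Definition drop_lin (G : ctx) : ctx :=
  map (fun o => match o with Some (Lin, _) => None | _ => o end) G.

(* ctx_split G G1 G2 : G = Gamma;(Delta1,Delta2), G1 = Gamma;Delta1,
   G2 = Gamma;Delta2 (disjoint union of the linear parts, shared Gamma) *)
Inductive ctx_split : ctx -> ctx -> ctx -> Prop :=
| cs_nil : ctx_split [] [] []
| cs_none : forall G G1 G2, ctx_split G G1 G2 ->
    ctx_split (None :: G) (None :: G1) (None :: G2)
| cs_nonlin : forall t G G1 G2, ctx_split G G1 G2 ->
    ctx_split (Some (NonLin, t) :: G) (Some (NonLin, t) :: G1) (Some (NonLin, t) :: G2)
| cs_lin_l : forall t G G1 G2, ctx_split G G1 G2 ->
    ctx_split (Some (Lin, t) :: G) (Some (Lin, t) :: G1) (None :: G2)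
| cs_lin_r : forall t G G1 G2, ctx_split G G1 G2 ->
    ctx_split (Some (Lin, t) :: G) (None :: G1) (Some (Lin, t) :: G2).

Inductive has_type : ctx -> tm -> ty -> Prop :=
| T_var_nl : forall G i t, lookup G i = Some (NonLin, t) -> no_lin G ->
    has_type G (Var i) t
| T_var_l : forall G i t, lookup G i = Some (Lin, t) -> only_lin G i ->
    has_type G (Var i) t
| T_fix : forall G t, no_lin G -> has_type G (Fix t) (TArrow (TArrow t t) t)
| T_num : forall G n, no_lin G -> has_type G (Num n) TNat
| T_succ : forall G, no_lin G -> has_type G Succ (TLolli TNat TNat)
| T_pred : forall G, no_lin G -> has_type G Pred (TLolli TNat TNat)
| T_iszero : forall G, no_lin G -> has_type G IsZero (TLolli TNat TBool)
| T_true : forall G, no_lin G -> has_type G Tru TBool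
| T_false : forall G, no_lin G -> has_type G Fls TBool
| T_if : forall G G1 G2 e1 e2 e3 t, ctx_split G G1 G2 ->
    has_type G1 e1 TBool -> has_type G2 e2 t -> has_type G2 e3 t ->
    has_type G (If e1 e2 e3) t
| T_pair : forall G e1 e2 t1 t2, has_type G e1 t1 -> has_type G e2 t2 ->
    has_type G (Pair e1 e2) (TWith t1 t2)
| T_proj1 : forall G e t1 t2, has_type G e (TWith t1 t2) -> has_type G (Proj1 e) t1
| T_proj2 : forall G e t1 t2, has_type G e (TWith t1 t2) -> has_type G (Proj2 e) t2
| T_tens : forall G G1 G2 e1 e2 t1 t2, ctx_split G G1 G2 ->
    has_type G1 e1 t1 -> has_type G2 e2 t2 -> has_type G (Tens e1 e2) (TTensor t1 t2)
| T_let : forall G G1 G2 e e' t1 t2 t, ctx_split G G1 G2 ->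
    has_type (Some (Lin, t2) :: Some (Lin, t1) :: G1) e t ->
    has_type G2 e' (TTensor t1 t2) ->
    has_type G (LetT e' e) t
| T_lam_arrow : forall G e t t', has_type (Some (NonLin, t) :: G) e t' ->
    has_type G (Lam e) (TArrow t t')
| T_app_arrow : forall G e e' t t', has_type G e (TArrow t' t) ->
    has_type (drop_lin G) e' t' -> has_type G (App e e') t
| T_lam_lolli : forall G e t t', has_type (Some (Lin, t) :: G) e t' ->
    has_type G (Lam e) (TLolli t t')
| T_app_lolli : forall G G1 G2 e e' t t', ctx_split G G1 G2 ->
    has_type G1 e (TLolli t' t) -> has_type G2 e' t' -> has_type G (App e e') t.

(* Main.v *)
Require Import Defs.
From Stdlib Require Import List Arith Lia.
Import ListNotations.

Lemma ren_ext : forall e r r', (forall n, r n = r' n) -> ren r e = ren r' e.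
Proof.
  induction e; intros r r' H; simpl; f_equal; auto.
  - apply IHe; intros [|n]; simpl; auto.
  - apply IHe2; intros [|[|n]]; simpl; auto.
Qed.

Lemma subst_ext : forall e s s', (forall n, s n = s' n) -> subst s e = subst s' e.
Proof.
  induction e; intros s s' H; simpl; f_equal; auto.
  - apply IHe; intros [|n]; simpl; auto; unfold up_sub; simpl; rewrite H; auto.
  - apply IHe2; intros [|[|n]]; simpl; auto; unfold up_sub; simpl; rewrite H; auto.
Qed.

Lemma ren_ren : forall e r r', ren r (ren r' e) = ren (fun n => r (r' n)) e.
Proof.
  induction e; intros r r'; simpl; f_equal; auto.
  - rewrite IHe; apply ren_ext; intros [|n]; reflexivity.
  - rewrite IHe2; apply ren_ext; intros [|[|n]]; reflexivity.
Qed.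

Lemma subst_ren : forall e s r, subst s (ren r e) = subst (fun n => s (r n)) e.
Proof.
  induction e; intros s r; simpl; f_equal; auto.
  - rewrite IHe; apply subst_ext; intros [|n]; reflexivity.
  - rewrite IHe2; apply subst_ext; intros [|[|n]]; reflexivity.
Qed.

Lemma ren_subst : forall e s r, ren r (subst s e) = subst (fun n => ren r (s n)) e.
Proof.
  induction e; intros s r; simpl; f_equal; auto.
  - rewrite IHe; apply subst_ext; intros [|n]; simpl; auto.
    unfold up_sub; simpl. rewrite !ren_ren. apply ren_ext; reflexivity.
  - rewrite IHe2; apply subst_ext; intros [|[|n]]; simpl; auto.
    unfold up_sub; simpl. rewrite !ren_ren. apply ren_ext; reflexivity.
Qed.

Lemma up_sub_comp : forall s t n,
  subst (up_sub t) (up_sub s n) = up_sub (fun m => subst t (s m)) n.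
Proof.
  intros s t [|n]; simpl; auto. unfold up_sub; simpl.
  rewrite subst_ren, ren_subst. apply subst_ext; reflexivity.
Qed.

Lemma up_sub_ext : forall s s' n, (forall m, s m = s' m) -> up_sub s n = up_sub s' n.
Proof. intros s s' [|n] H; unfold up_sub; simpl; auto. rewrite H; auto. Qed.

Lemma subst_subst : forall e s u, subst u (subst s e) = subst (fun n => subst u (s n)) e.
Proof.
  induction e; intros s u; simpl; f_equal; auto.
  - rewrite IHe; apply subst_ext; intros n; apply up_sub_comp.
  - rewrite IHe2; apply subst_ext; intros n.
    rewrite up_sub_comp. apply up_sub_ext. intros m; apply up_sub_comp.
Qed.

Lemma subst_var : forall e, subst Var e = e.
Proof.
  induction e; simpl; f_equal; auto.
  - rewrite <- IHe at 2. apply subst_ext; intros [|n]; reflexivity.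
  - rewrite <- IHe2 at 2. apply subst_ext; intros [|[|n]]; reflexivity.
Qed.

Fixpoint ins (k : nat) (x : option (mode*ty)) (G : ctx) : ctx :=
  match k with
  | 0 => x :: G
  | S k => match G with
           | [] => None :: ins k x []
           | y :: G => y :: ins k x G
           end
  end.

Fixpoint lift (k : nat) : nat -> nat :=
  match k with 0 => S | S k => up_ren (lift k) end.

Fixpoint sig (e' : tm) (k : nat) : nat -> tm :=
  match k with 0 => scons e' Var | S k => up_sub (sig e' k) end.

Definition dl (o : option (mode * ty)) : option (mode * ty) :=
  match o with Some (Lin, _) => None | _ => o end.

Definition nonlin (x : option (mode * ty)) := forall u, x <> Some (Lin, u).

Lemma lookup_ins_k : forall k x G, lookup (ins k x G) k = x.
Proof. unfold lookup. induction k; intros x [|y G]; simpl; auto. Qed.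

Lemma lookup_ins_lift : forall k x G i, lookup (ins k x G) (lift k i) = lookup G i.
Proof.
  unfold lookup. induction k; intros x G i; simpl; auto.
  destruct i; destruct G; simpl; auto;
  try (rewrite IHk; destruct i; reflexivity).
Qed.

Lemma lift_cases : forall k i, i = k \/ exists j, i = lift k j.
Proof.
  induction k; intros i.
  - destruct i; [left; auto | right; exists i; auto].
  - destruct i.
    + right; exists 0; reflexivity.
    + destruct (IHk i) as [->|[j ->]]; [left; auto | right; exists (S j); reflexivity].
Qed.

Lemma lift_neq : forall k j, lift k j <> k.
Proof.
  induction k; intros j; simpl; [discriminate|].
  destruct j; simpl; [discriminate|]. intro H; injection H; apply IHk.
Qed.

Lemma lift_inj : forall k i j, lift k i = lift k j -> i = j.
Proof.
  induction k; intros i j; simpl; [congruence|].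
  destruct i, j; simpl; try discriminate; auto;
  intro H; injection H; intro; f_equal; eauto.
Qed.

Lemma sig_lift : forall e' k j, sig e' k (lift k j) = Var j.
Proof.
  intros e'; induction k; intros j; simpl; auto.
  destruct j; simpl; auto. unfold up_sub; simpl. rewrite IHk; reflexivity.
Qed.

Lemma no_lin_ins : forall k x G, no_lin (ins k x G) <-> no_lin G /\ nonlin x.
Proof.
  unfold no_lin, nonlin; split.
  - intros H; split.
    + intros i t. rewrite <- (lookup_ins_lift k x). apply H.
    + intros u. rewrite <- (lookup_ins_k k x G). apply H.
  - intros [H1 H2] i t. destruct (lift_cases k i) as [->|[j ->]].
    + rewrite lookup_ins_k; auto.
    + rewrite lookup_ins_lift; auto.
Qed.

Lemma only_lin_ins : forall k x G i,
  only_lin (ins k x G) (lift k i) <-> only_lin G i /\ nonlin x.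
Proof.
  unfold only_lin, nonlin; split.
  - intros H; split.
    + intros j t Hj. rewrite <- (lookup_ins_lift k x). apply H.
      intro E; apply Hj; eapply lift_inj; eauto.
    + intros u. rewrite <- (lookup_ins_k k x G). apply H. intro E; symmetry in E; eapply lift_neq; eauto.
  - intros [H1 H2] j t Hj. destruct (lift_cases k j) as [->|[j' ->]].
    + rewrite lookup_ins_k; auto.
    + rewrite lookup_ins_lift; auto.
Qed.

Lemma only_lin_ins_k : forall k x G, only_lin (ins k x G) k -> no_lin G.
Proof.
  unfold only_lin, no_lin; intros k x G H i t.
  rewrite <- (lookup_ins_lift k x). apply H. apply lift_neq.
Qed.

Inductive sent : option (mode*ty) -> option (mode*ty) -> option (mode*ty) -> Prop :=
| se_none : sent None None None
| se_nl : forall t, sent (Some (NonLin, t)) (Some (NonLin, t)) (Some (NonLin, t))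
| se_l : forall t, sent (Some (Lin, t)) (Some (Lin, t)) None
| se_r : forall t, sent (Some (Lin, t)) None (Some (Lin, t)).

Lemma split_ins_inv : forall k x G H1 H2, ctx_split (ins k x G) H1 H2 ->
  exists x1 x2 G1 G2, H1 = ins k x1 G1 /\ H2 = ins k x2 G2 /\ sent x x1 x2 /\ ctx_split G G1 G2.
Proof.
  induction k; intros x G H1 H2 H.
  - inversion H; subst; do 4 eexists; repeat split; eauto; constructor.
  - destruct G as [|y G]; simpl in H.
    + inversion H; subst. match goal with Hh : ctx_split (ins k _ _) _ _ |- _ => destruct (IHk _ _ _ _ Hh) as (x1 & x2 & G1' & G2' & -> & -> & Hs & Hsp) end.
      inversion Hsp; subst. exists x1, x2, [], []; repeat split; auto; constructor.
    + inversion H; subst;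
      match goal with Hh : ctx_split (ins k _ _) _ _ |- _ => destruct (IHk _ _ _ _ Hh) as (x1 & x2 & G1' & G2' & -> & -> & Hs & Hsp) end;
      do 2 eexists; eexists (_ :: G1'); eexists (_ :: G2'); repeat split; eauto; constructor; auto.
Qed.

Lemma split_ins : forall k x x1 x2 G G1 G2, ctx_split G G1 G2 -> sent x x1 x2 ->
  ctx_split (ins k x G) (ins k x1 G1) (ins k x2 G2).
Proof.
  induction k; intros x x1 x2 G G1 G2 H Hs.
  - destruct Hs; constructor; auto.
  - inversion H; subst; simpl; constructor; auto; apply IHk; auto; constructor.
Qed.

Lemma split_comm : forall G G1 G2, ctx_split G G1 G2 -> ctx_split G G2 G1.
Proof. induction 1; constructor; auto. Qed.

Lemma split_assoc : forall F Gx E, ctx_split F Gx E -> forall A B, ctx_split Gx A B ->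
  exists F1, ctx_split F F1 B /\ ctx_split F1 A E.
Proof.
  induction 1; intros A B HS; inversion HS; subst;
  try (destruct (IHctx_split _ _ ltac:(eassumption)) as (F1 & ? & ?);
       eexists (_ :: F1); split; constructor; eauto).
  exists []; split; constructor.
Qed.

Lemma no_lin_cons : forall x G, no_lin (x :: G) -> no_lin G /\ nonlin x.
Proof.
  unfold no_lin, nonlin, lookup; intros x G H; split.
  - intros i t; apply (H (S i)).
  - intros u; apply (H 0).
Qed.

Lemma split_nolin_l : forall F A E, ctx_split F A E -> no_lin A -> F = E.
Proof.
  induction 1; intros Hn; auto; apply no_lin_cons in Hn as [Hn Hx]; f_equal; auto.
  exfalso; eapply Hx; eauto.
Qed.

Lemma split_drop : forall F A B, ctx_split F A B -> drop_lin A = drop_lin F /\ drop_lin B = drop_lin F.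
Proof. induction 1; simpl; intuition congruence. Qed.

Lemma drop_lin_ins : forall k x G, drop_lin (ins k x G) = ins k (dl x) (drop_lin G).
Proof.
  induction k; intros x G; simpl; auto.
  destruct G; simpl; rewrite IHk; auto.
Qed.

Lemma drop_lin_idem : forall G, drop_lin (drop_lin G) = drop_lin G.
Proof. induction G as [|[[[] ?]|] G IH]; simpl; f_equal; auto. Qed.

Lemma drop_lin_nolin : forall G, no_lin G -> drop_lin G = G.
Proof.
  induction G as [|x G IH]; simpl; auto; intros H.
  apply no_lin_cons in H as [H Hx]. rewrite IH; auto.
  destruct x as [[[] ?]|]; auto. exfalso; eapply Hx; eauto.
Qed.

Lemma no_lin_drop : forall G, no_lin (drop_lin G).
Proof.
  unfold no_lin, lookup. induction G as [|x G IH]; intros [|i] t; simpl; try discriminate.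
  - destruct x as [[[] ?]|]; discriminate.
  - apply IH.
Qed.

Lemma sent_refl : forall x, nonlin x -> sent x x x.
Proof.
  intros [[[] t]|] H; try constructor. exfalso; eapply H; eauto.
Qed.

Lemma dl_nonlin : forall x, nonlin x -> dl x = x.
Proof. intros [[[] t]|] H; auto. exfalso; eapply H; eauto. Qed.

Lemma nonlin_dl : forall x, nonlin (dl x).
Proof. intros [[[] t]|] u; simpl; discriminate. Qed.

Lemma nonlin_None : nonlin None.
Proof. intros u; discriminate. Qed.

Lemma drop_lin_cons : forall x G, drop_lin (x :: G) = dl x :: drop_lin G.
Proof. reflexivity. Qed.

Lemma weaken : forall G e t, has_type G e t -> forall k x, nonlin x ->
  has_type (ins k x G) (ren (lift k) e) t.
Proof.
  induction 1; intros k x Hx; simpl.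
  - apply T_var_nl; [rewrite lookup_ins_lift; auto | apply no_lin_ins; auto].
  - apply T_var_l; [rewrite lookup_ins_lift; auto | apply only_lin_ins; auto].
  - constructor; apply no_lin_ins; auto.
  - constructor; apply no_lin_ins; auto.
  - constructor; apply no_lin_ins; auto.
  - constructor; apply no_lin_ins; auto.
  - constructor; apply no_lin_ins; auto.
  - constructor; apply no_lin_ins; auto.
  - constructor; apply no_lin_ins; auto.
  - eapply T_if; [apply split_ins; eauto; apply sent_refl; auto | auto | auto | auto].
  - constructor; auto.
  - econstructor; eauto.
  - econstructor; eauto.
  - eapply T_tens; [apply split_ins; eauto; apply sent_refl; auto | auto | auto].
  - eapply T_let; [apply split_ins; eauto; apply sent_refl; auto | | auto].
    apply (IHhas_type1 (S (S k)) x Hx).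
  - constructor. apply (IHhas_type (S k) x Hx).
  - eapply T_app_arrow; eauto. rewrite drop_lin_ins, dl_nonlin; auto.
  - constructor. apply (IHhas_type (S k) x Hx).
  - eapply T_app_lolli; [apply split_ins; eauto; apply sent_refl; auto | auto | auto].
Qed.

Lemma weaken0 : forall G e t x, nonlin x -> has_type G e t -> has_type (x :: G) (ren S e) t.
Proof. intros G e t x Hx H. exact (weaken G e t H 0 x Hx). Qed.

Lemma sent_none : forall x1 x2, sent None x1 x2 -> x1 = None /\ x2 = None.
Proof. intros x1 x2 H; inversion H; auto. Qed.

Lemma strengthen : forall H e t, has_type H e t -> forall k G e', H = ins k None G ->
  has_type G (subst (sig e' k) e) t.
Proof.
  induction 1; intros k G0 e0 Heq; subst; simpl;
  try (constructor; apply no_lin_ins in H; tauto).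
  - destruct (lift_cases k i) as [->|[j ->]].
    + rewrite lookup_ins_k in H; discriminate.
    + rewrite sig_lift. rewrite lookup_ins_lift in H. apply no_lin_ins in H0.
      apply T_var_nl; tauto.
  - destruct (lift_cases k i) as [->|[j ->]].
    + rewrite lookup_ins_k in H; discriminate.
    + rewrite sig_lift. rewrite lookup_ins_lift in H. apply only_lin_ins in H0.
      apply T_var_l; tauto.
  - apply split_ins_inv in H as (x1 & x2 & G1' & G2' & -> & -> & Hs & Hsp).
    apply sent_none in Hs as [-> ->]. eapply T_if; eauto.
  - constructor; eauto.
  - econstructor; eauto.
  - econstructor; eauto.
  - apply split_ins_inv in H as (x1 & x2 & G1' & G2' & -> & -> & Hs & Hsp).
    apply sent_none in Hs as [-> ->]. eapply T_tens; eauto.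
  - apply split_ins_inv in H as (x1 & x2 & G1' & G2' & -> & -> & Hs & Hsp).
    apply sent_none in Hs as [-> ->]. eapply T_let; eauto.
    apply (IHhas_type1 (S (S k)) (_ :: _ :: G1') e0). reflexivity.
  - constructor. apply (IHhas_type (S k) (_ :: G0) e0). reflexivity.
  - eapply T_app_arrow; eauto. apply IHhas_type2. rewrite drop_lin_ins; reflexivity.
  - constructor. apply (IHhas_type (S k) (_ :: G0) e0). reflexivity.
  - apply split_ins_inv in H as (x1 & x2 & G1' & G2' & -> & -> & Hs & Hsp).
    apply sent_none in Hs as [-> ->]. eapply T_app_lolli; eauto.
Qed.

Lemma sent_nl : forall u x1 x2, sent (Some (NonLin, u)) x1 x2 ->
  x1 = Some (NonLin, u) /\ x2 = Some (NonLin, u).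
Proof. intros u x1 x2 H; inversion H; auto. Qed.

Lemma subst_nl : forall H e t, has_type H e t -> forall k u G e',
  H = ins k (Some (NonLin, u)) G -> has_type (drop_lin G) (sig e' k k) u ->
  has_type G (subst (sig e' k) e) t.
Proof.
  induction 1; intros k u G0 e0 Heq He; subst; simpl;
  try (constructor; apply no_lin_ins in H; tauto).
  - destruct (lift_cases k i) as [->|[j ->]].
    + rewrite lookup_ins_k in H; injection H; intros ->.
      apply no_lin_ins in H0 as [H0 _]. rewrite drop_lin_nolin in He; auto.
    + rewrite sig_lift. rewrite lookup_ins_lift in H. apply no_lin_ins in H0.
      apply T_var_nl; tauto.
  - destruct (lift_cases k i) as [->|[j ->]].
    + rewrite lookup_ins_k in H; discriminate.
    + rewrite sig_lift. rewrite lookup_ins_lift in H. apply only_lin_ins in H0.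
      apply T_var_l; tauto.
  - apply split_ins_inv in H as (x1 & x2 & G1' & G2' & -> & -> & Hs & Hsp).
    apply sent_nl in Hs as [-> ->]. destruct (split_drop _ _ _ Hsp) as [D1 D2].
    eapply T_if; eauto; [eapply IHhas_type1 | eapply IHhas_type2 | eapply IHhas_type3];
    eauto; congruence.
  - constructor; eauto.
  - econstructor; eauto.
  - econstructor; eauto.
  - apply split_ins_inv in H as (x1 & x2 & G1' & G2' & -> & -> & Hs & Hsp).
    apply sent_nl in Hs as [-> ->]. destruct (split_drop _ _ _ Hsp) as [D1 D2].
    eapply T_tens; eauto; [eapply IHhas_type1 | eapply IHhas_type2]; eauto; congruence.
  - apply split_ins_inv in H as (x1 & x2 & G1' & G2' & -> & -> & Hs & Hsp).
    apply sent_nl in Hs as [-> ->]. destruct (split_drop _ _ _ Hsp) as [D1 D2].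
    eapply T_let; eauto.
    + apply (IHhas_type1 (S (S k)) u (_ :: _ :: G1') e0); [reflexivity|].
      rewrite !drop_lin_cons. simpl.
      apply weaken0; [apply nonlin_None|].
      apply weaken0; [apply nonlin_None|].
      congruence.
    + eapply IHhas_type2; eauto; congruence.
  - constructor. apply (IHhas_type (S k) u (_ :: G0) e0); [reflexivity|].
    rewrite drop_lin_cons. apply weaken0; auto. apply nonlin_dl.
  - eapply T_app_arrow; eauto. eapply IHhas_type2.
    + rewrite drop_lin_ins; reflexivity.
    + rewrite drop_lin_idem; auto.
  - constructor. apply (IHhas_type (S k) u (_ :: G0) e0); [reflexivity|].
    rewrite drop_lin_cons. apply weaken0; auto. apply nonlin_dl.
  - apply split_ins_inv in H as (x1 & x2 & G1' & G2' & -> & -> & Hs & Hsp).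
    apply sent_nl in Hs as [-> ->]. destruct (split_drop _ _ _ Hsp) as [D1 D2].
    eapply T_app_lolli; eauto; [eapply IHhas_type1 | eapply IHhas_type2]; eauto; congruence.
Qed.

Lemma sent_lin : forall u x1 x2, sent (Some (Lin, u)) x1 x2 ->
  (x1 = Some (Lin, u) /\ x2 = None) \/ (x1 = None /\ x2 = Some (Lin, u)).
Proof. intros u x1 x2 H; inversion H; auto. Qed.

Lemma not_no_lin_ins : forall k u G, no_lin (ins k (Some (Lin, u)) G) -> False.
Proof. intros k u G H. apply no_lin_ins in H as [_ H]. eapply H; eauto. Qed.

Lemma subst_lin : forall H e t, has_type H e t -> forall k u Gx F E e',
  H = ins k (Some (Lin, u)) Gx -> ctx_split F Gx E -> has_type E (sig e' k k) u ->
  has_type F (subst (sig e' k) e) t.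
Proof.
  induction 1; intros k u Gx F E e0 Heq Hsp He; subst; simpl;
  try (exfalso; eapply not_no_lin_ins; eassumption).
  - destruct (lift_cases k i) as [->|[j ->]].
    + rewrite lookup_ins_k in H; injection H; intros ->.
      apply only_lin_ins_k in H0. rewrite (split_nolin_l _ _ _ Hsp H0); auto.
    + apply only_lin_ins in H0 as [_ H0]. exfalso; eapply H0; eauto.
  - apply split_ins_inv in H as (x1 & x2 & A & B & -> & -> & Hs & HAB).
    apply sent_lin in Hs as [[-> ->]|[-> ->]].
    + destruct (split_assoc _ _ _ Hsp _ _ HAB) as (F1 & HF & HF1).
      eapply T_if; eauto; eapply strengthen; eauto.
    + destruct (split_assoc _ _ _ Hsp _ _ (split_comm _ _ _ HAB)) as (F2 & HF & HF2).
      eapply T_if; [apply split_comm; eauto | eapply strengthen; eauto | eauto | eauto].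
  - constructor; eauto.
  - econstructor; eauto.
  - econstructor; eauto.
  - apply split_ins_inv in H as (x1 & x2 & A & B & -> & -> & Hs & HAB).
    apply sent_lin in Hs as [[-> ->]|[-> ->]].
    + destruct (split_assoc _ _ _ Hsp _ _ HAB) as (F1 & HF & HF1).
      eapply T_tens; eauto; eapply strengthen; eauto.
    + destruct (split_assoc _ _ _ Hsp _ _ (split_comm _ _ _ HAB)) as (F2 & HF & HF2).
      eapply T_tens; [apply split_comm; eauto | eapply strengthen; eauto | eauto].
  - apply split_ins_inv in H as (x1 & x2 & A & B & -> & -> & Hs & HAB).
    apply sent_lin in Hs as [[-> ->]|[-> ->]].
    + destruct (split_assoc _ _ _ Hsp _ _ HAB) as (F1 & HF & HF1).
      eapply T_let; [eauto | | eapply strengthen; eauto].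
      apply (IHhas_type1 (S (S k)) u (Some (Lin, t2) :: Some (Lin, t1) :: A) (Some (Lin, t2) :: Some (Lin, t1) :: F1) (None :: None :: E) e0);
        [reflexivity | constructor; constructor; auto |].
      apply weaken0; [apply nonlin_None|]. apply weaken0; [apply nonlin_None|]. auto.
    + destruct (split_assoc _ _ _ Hsp _ _ (split_comm _ _ _ HAB)) as (F2 & HF & HF2).
      eapply T_let; [apply split_comm; eauto | | eauto].
      apply (strengthen _ _ _ H0_ (S (S k)) (Some (Lin, t2) :: Some (Lin, t1) :: A) e0). reflexivity.
  - constructor.
    apply (IHhas_type (S k) u (Some (NonLin, t) :: Gx) (Some (NonLin, t) :: F) (Some (NonLin, t) :: E) e0);
      [reflexivity | constructor; auto |].
    apply weaken0; auto. intros v; discriminate.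
  - eapply T_app_arrow; eauto. eapply strengthen; eauto.
    destruct (split_drop _ _ _ Hsp) as [D1 _]. rewrite <- D1, drop_lin_ins. reflexivity.
  - constructor.
    apply (IHhas_type (S k) u (Some (Lin, t) :: Gx) (Some (Lin, t) :: F) (None :: E) e0);
      [reflexivity | constructor; auto |].
    apply weaken0; auto. apply nonlin_None.
  - apply split_ins_inv in H as (x1 & x2 & A & B & -> & -> & Hs & HAB).
    apply sent_lin in Hs as [[-> ->]|[-> ->]].
    + destruct (split_assoc _ _ _ Hsp _ _ HAB) as (F1 & HF & HF1).
      eapply T_app_lolli; eauto; eapply strengthen; eauto.
    + destruct (split_assoc _ _ _ Hsp _ _ (split_comm _ _ _ HAB)) as (F2 & HF & HF2).
      eapply T_app_lolli; [apply split_comm; eauto | eapply strengthen; eauto | eauto].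
Qed.

Lemma subst2_eq : forall e1 e2 e,
  subst (sig e2 0) (subst (sig e1 1) e) = subst2 e1 e2 e.
Proof.
  intros e1 e2 e. unfold subst2. rewrite subst_subst. apply subst_ext.
  intros [|[|n]]; simpl; auto.
  unfold up_sub; simpl. rewrite subst_ren. apply subst_var.
Qed.

Lemma typed_nolin_num : forall G n t, has_type G (Num n) t -> no_lin G /\ t = TNat.
Proof. intros G n t H; inversion H; auto. Qed.

Lemma inv_lam_arrow : forall G b t t', has_type G (Lam b) (TArrow t t') ->
  has_type (Some (NonLin, t) :: G) b t'.
Proof. intros G b t t' H; inversion H; auto. Qed.

Lemma inv_lam_lolli : forall G b t t', has_type G (Lam b) (TLolli t t') ->
  has_type (Some (Lin, t) :: G) b t'.
Proof. intros G b t t' H; inversion H; auto. Qed.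

Lemma inv_app : forall G a b t, has_type G (App a b) t ->
  (exists t', has_type G a (TArrow t' t) /\ has_type (drop_lin G) b t') \/
  (exists t' G1 G2, ctx_split G G1 G2 /\ has_type G1 a (TLolli t' t) /\ has_type G2 b t').
Proof. intros G a b t H; inversion H; subst; [left|right]; eauto 10. Qed.

Lemma inv_if : forall G a b c t, has_type G (If a b c) t ->
  exists G1 G2, ctx_split G G1 G2 /\ has_type G1 a TBool /\ has_type G2 b t /\ has_type G2 c t.
Proof. intros G a b c t H; inversion H; subst; eauto 10. Qed.

Lemma inv_proj1 : forall G a t, has_type G (Proj1 a) t -> exists t2, has_type G a (TWith t t2).
Proof. intros G a t H; inversion H; subst; eauto. Qed.

Lemma inv_proj2 : forall G a t, has_type G (Proj2 a) t -> exists t1, has_type G a (TWith t1 t).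
Proof. intros G a t H; inversion H; subst; eauto. Qed.

Lemma inv_pair : forall G a b t, has_type G (Pair a b) t ->
  exists t1 t2, t = TWith t1 t2 /\ has_type G a t1 /\ has_type G b t2.
Proof. intros G a b t H; inversion H; subst; eauto. Qed.

Lemma inv_let : forall G a b t, has_type G (LetT a b) t ->
  exists G1 G2 t1 t2, ctx_split G G1 G2 /\
    has_type (Some (Lin, t2) :: Some (Lin, t1) :: G1) b t /\ has_type G2 a (TTensor t1 t2).
Proof. intros G a b t H; inversion H; subst; eauto 10. Qed.

Lemma inv_tens : forall G a b t1 t2, has_type G (Tens a b) (TTensor t1 t2) ->
  exists G1 G2, ctx_split G G1 G2 /\ has_type G1 a t1 /\ has_type G2 b t2.
Proof. intros G a b t1 t2 H; inversion H; subst; eauto 10. Qed.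

Lemma inv_succ : forall G t, has_type G Succ t -> no_lin G /\ t = TLolli TNat TNat.
Proof. intros G t H; inversion H; auto. Qed.
Lemma inv_pred : forall G t, has_type G Pred t -> no_lin G /\ t = TLolli TNat TNat.
Proof. intros G t H; inversion H; auto. Qed.
Lemma inv_iszero : forall G t, has_type G IsZero t -> no_lin G /\ t = TLolli TNat TBool.
Proof. intros G t H; inversion H; auto. Qed.
Lemma inv_tru : forall G t, has_type G Tru t -> no_lin G.
Proof. intros G t H; inversion H; auto. Qed.
Lemma inv_fls : forall G t, has_type G Fls t -> no_lin G.
Proof. intros G t H; inversion H; auto. Qed.
Lemma inv_num : forall G n t, has_type G (Num n) t -> no_lin G /\ t = TNat.
Proof. intros G n t H; inversion H; auto. Qed.
Lemma inv_fix : forall G u t, has_type G (Fix u) t -> no_lin G /\ t = TArrow (TArrow u u) u.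
Proof. intros G u t H; inversion H; auto. Qed.

Ltac app_inv H :=
  apply inv_app in H as [(?t' & ?H1 & ?H2)|(?t' & ?G1 & ?G2 & ?Hsp & ?H1 & ?H2)].

Theorem proposition2 (G : ctx) (e e' : tm) (t : ty) :
  has_type G e t -> step e e' -> has_type G e' t.
Proof.
  intros Ht Hs. revert G t Ht. induction Hs; intros G t0 Ht.
  -
    app_inv Ht.
    + exact (subst_nl _ _ _ (inv_lam_arrow _ _ _ _ H1) 0 t' G e' eq_refl H2).
    + exact (subst_lin _ _ _ (inv_lam_lolli _ _ _ _ H1) 0 t' G1 G G2 e' eq_refl Hsp H2).
  -
    app_inv Ht.
    + apply inv_fix in H1 as [Hn E]; injection E; intros; subst.
      rewrite drop_lin_nolin in H2 by auto.
      eapply T_app_arrow; eauto.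
      eapply T_app_arrow.
      * constructor. apply no_lin_drop.
      * rewrite drop_lin_idem, drop_lin_nolin; auto.
    + apply inv_fix in H1 as [_ E]; discriminate.
  - app_inv Ht.
    + apply inv_succ in H1 as [_ E]; discriminate.
    + apply inv_succ in H1 as [Hn E]; injection E; intros; subst.
      apply inv_num in H2 as [Hn2 _]. rewrite (split_nolin_l _ _ _ Hsp Hn). constructor; auto.
  - app_inv Ht.
    + apply inv_pred in H1 as [_ E]; discriminate.
    + apply inv_pred in H1 as [Hn E]; injection E; intros; subst.
      apply inv_num in H2 as [Hn2 _]. rewrite (split_nolin_l _ _ _ Hsp Hn). constructor; auto.
  - app_inv Ht.
    + apply inv_pred in H1 as [_ E]; discriminate.
    + apply inv_pred in H1 as [Hn E]; injection E; intros; subst.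
      apply inv_num in H2 as [Hn2 _]. rewrite (split_nolin_l _ _ _ Hsp Hn). constructor; auto.
  - app_inv Ht.
    + apply inv_iszero in H1 as [_ E]; discriminate.
    + apply inv_iszero in H1 as [Hn E]; injection E; intros; subst.
      apply inv_num in H2 as [Hn2 _]. rewrite (split_nolin_l _ _ _ Hsp Hn). constructor; auto.
  - app_inv Ht.
    + apply inv_iszero in H1 as [_ E]; discriminate.
    + apply inv_iszero in H1 as [Hn E]; injection E; intros; subst.
      apply inv_num in H2 as [Hn2 _]. rewrite (split_nolin_l _ _ _ Hsp Hn). constructor; auto.
  - apply inv_if in Ht as (G1 & G2 & Hsp & H1 & H2 & H3).
    apply inv_tru in H1. rewrite (split_nolin_l _ _ _ Hsp H1); auto.
  - apply inv_if in Ht as (G1 & G2 & Hsp & H1 & H2 & H3).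
    apply inv_fls in H1. rewrite (split_nolin_l _ _ _ Hsp H1); auto.
  - apply inv_proj1 in Ht as (t2 & H). apply inv_pair in H as (t1' & t2' & E & H1 & H2).
    injection E; intros; subst; auto.
  - apply inv_proj2 in Ht as (t1 & H). apply inv_pair in H as (t1' & t2' & E & H1 & H2).
    injection E; intros; subst; auto.
  -
    apply inv_let in Ht as (G1 & G2 & t1 & t2 & Hsp & Hb & Ht).
    apply inv_tens in Ht as (G21 & G22 & Hsp2 & He1 & He2).
    destruct (split_assoc _ _ _ (split_comm _ _ _ Hsp) _ _ Hsp2) as (F1 & HF & HF1).
    rewrite <- subst2_eq.
    assert (Hstep : has_type (Some (Lin, t2) :: F1) (subst (sig e1 1) e) t0).
    { apply (subst_lin _ _ _ Hb 1 t1 (Some (Lin, t2) :: G1) (Some (Lin, t2) :: F1) (None :: G21) e1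
               eq_refl).
      - constructor. apply split_comm; auto.
      - apply weaken0; [apply nonlin_None | auto]. }
    exact (subst_lin _ _ _ Hstep 0 t2 F1 G G22 e2 eq_refl HF He2).
  - app_inv Ht.
    + apply inv_succ in H1 as [_ E]; discriminate.
    + eapply T_app_lolli; eauto.
  - app_inv Ht.
    + apply inv_pred in H1 as [_ E]; discriminate.
    + eapply T_app_lolli; eauto.
  - app_inv Ht.
    + apply inv_iszero in H1 as [_ E]; discriminate.
    + eapply T_app_lolli; eauto.
  - app_inv Ht.
    + eapply T_app_arrow; eauto.
    + eapply T_app_lolli; eauto.
  - apply inv_if in Ht as (G1 & G2 & Hsp & H1 & H2 & H3). eapply T_if; eauto.
  - apply inv_proj1 in Ht as (t2 & H). eapply T_proj1; eauto.
  - apply inv_proj2 in Ht as (t1 & H). eapply T_proj2; eauto.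
  - apply inv_let in Ht as (G1 & G2 & t1 & t2 & Hsp & Hb & Ht). eapply T_let; eauto.
Qed.
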